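(* Let $y\in\{1,\dots,C\}^N$ be node labels with exactly $K=N/C$ nodes in each class, and let $\mathcal G_r=(\mathcal V,\mathcal E_r)$, $r=1,\dots,R$, be independent random undirected graphs on the common node set $\mathcal V=\{1,\dots,N\}$, with $\mathcal N_r(i)=\{j:(i,j)\in\mathcal E_r\}$. Assume that in each graph $\mathcal G_r$ the events $\{(i,j)\in\mathcal E_r\}$ are independent across unordered node pairs $\{i,j\}$, and that $\mathbb P[(i,j)\in\mathcal E_r]\le q$ whenever $y_i\neq y_j$. Then $$\mathbb P\Big[\bigcap_{i=1}^N\bigcup_{r=1}^R\{y_j=y_i\ \text{for all } j\in\mathcal N_r(i)\}\Big]\ \ge\ \Big(1-\Big(1-(1-q)^{\frac{N(C-1)}{C}}\Big)^R\Big)^N.$$ *)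

(* Defs.v *)
From mathcomp Require Import all_boot all_order all_algebra.
Set Implicit Arguments. Unset Strict Implicit. Unset Printing Implicit Defensive.
Import Order.TTheory GRing.Theory Num.Theory.
Local Open Scope ring_scope.

(* unordered node pairs {i,j}, i <> j, represented as (i,j) with i < j *)
Definition upair (N : nat) := {p : 'I_N * 'I_N | (p.1 < p.2)%N}.

(* an outcome: for each graph r and each unordered pair, whether the edge is present *)
Definition outcome (R N : nat) := {ffun 'I_R * upair N -> bool}.

Definition adj (R N : nat) (w : outcome R N) (r : 'I_R) (i j : 'I_N) : bool :=
  match insub (i, j) : option (upair N) with
  | Some e => w (r, e)
  | None => match insub (j, i) : option (upair N) with
            | Some e => w (r, e)
            | None => false
            end
  end.

(* probability of an outcome when every edge indicator (r,{i,j}) is an independent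
   Bernoulli variable of parameter p (r, {i,j}) *)
Definition weight (F : ringType) (R N : nat) (p : 'I_R * upair N -> F)
  (w : outcome R N) : F :=
  \prod_(x : 'I_R * upair N) (if w x then p x else 1 - p x).

Definition Prob (F : ringType) (R N : nat) (p : 'I_R * upair N -> F)
  (A : pred (outcome R N)) : F :=
  \sum_(w : outcome R N | A w) weight p w.

Definition homophilous_event (R N C : nat) (y : 'I_N -> 'I_C) : pred (outcome R N) :=
  fun w => [forall i : 'I_N, [exists r : 'I_R,
             [forall j : 'I_N, adj w r i j ==> (y j == y i)]]].

(* Main.v *)
Require Import Defs.
From mathcomp Require Import all_boot all_order all_algebra.
From mathcomp Require Import lra zify.
Set Implicit Arguments. Unset Strict Implicit. Unset Printing Implicit Defensive.
Import Order.TTheory GRing.Theory Num.Theory.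
Local Open Scope ring_scope.
Lemma set_ind' (I : finType) (P : {set I} -> Prop) : P set0 ->
  (forall (x : I) (S : {set I}), x \notin S -> P S -> P (x |: S)) -> forall S, P S.
Proof.
move=> P0 PU S; elim: {S}#|S| {-2}S (erefl #|S|) => [|n IH] S hS.
  by move/eqP: hS; rewrite cards_eq0 => /eqP->.
have /set0Pn[x xS]: S != set0 by rewrite -card_gt0 hS.
rewrite -(setD1K xS); apply: PU; first by rewrite !inE eqxx.
by apply: IH; move: hS; rewrite (cardsD1 x) xS add1n => -[].
Qed.

Section Harris.
Variable (F : realFieldType) (I : finType) (p : I -> F).
Hypothesis hp : forall x, 0 <= p x <= 1.

Definition pw (x : I) (b : bool) : F := if b then p x else 1 - p x.
Definition agree (S : {set I}) (v w : {ffun I -> bool}) : bool :=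
  [forall z, (z \notin S) ==> (v z == w z)].
Definition ES (S : {set I}) (f : {ffun I -> bool} -> F) (w : {ffun I -> bool}) : F :=
  \sum_(v | agree S v w) (\prod_(z in S) pw z (v z)) * f v.
Definition upd (w : {ffun I -> bool}) x b : {ffun I -> bool} :=
  [ffun z => if z == x then b else w z].

Lemma pw_ge0 x b : 0 <= pw x b.
Proof. by have := hp x; rewrite /pw; case: b => /andP[]; rewrite // subr_ge0. Qed.

Lemma ES0 f w : ES set0 f w = f w.
Proof.
rewrite /ES (big_pred1 w) ?big_set0 ?mul1r // => v /=.
apply/forallP/eqP => [H|->]; last by move=> z; rewrite eqxx implybT.
by apply/ffunP => z; move: (H z); rewrite in_set0 /= => /eqP.
Qed.

Lemma agree_upd (S : {set I}) (v w : {ffun I -> bool}) (x : I) (b : bool) : x \notin S ->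
  agree S v (upd w x b) = agree (x |: S) v w && (v x == b).
Proof.
move=> xS; apply/forallP/andP => [H|[/forallP H1 /eqP H2] z].
  split; last by move: (H x); rewrite xS /upd ffunE eqxx.
  apply/forallP => z; apply/implyP; rewrite !inE negb_or => /andP[zx zS].
  by move: (H z); rewrite zS /upd ffunE (negbTE zx).
apply/implyP => zS; rewrite /upd ffunE; case: (z =P x) => [zx|/eqP zx]; first by rewrite zx H2 eqxx.
by move: (H1 z); rewrite !inE negb_or zx zS.
Qed.

Lemma agree_at (S : {set I}) (v w : {ffun I -> bool}) (x : I) (b : bool) : x \notin S -> agree S v (upd w x b) -> v x = b.
Proof. by move=> xS; rewrite agree_upd // => /andP[_ /eqP]. Qed.

Lemma ESU f (S : {set I}) (x : I) w : x \notin S ->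
  ES (x |: S) f w = p x * ES S f (upd w x true) + (1 - p x) * ES S f (upd w x false).
Proof.
move=> xS; rewrite /ES (bigID (fun v : {ffun I -> bool} => v x)) /= !mulr_sumr.
congr (_ + _); apply: eq_big => v.
- by rewrite agree_upd // eqb_id.
- by move=> /andP[_ vx]; rewrite big_setU1 //= vx mulrA.
- by rewrite agree_upd // eqbF_neg.
- by move=> /andP[_ /negbTE vx]; rewrite big_setU1 //= vx mulrA.
Qed.

Lemma ES_ext S f g w : (forall v, f v = g v) -> ES S f w = ES S g w.
Proof. by move=> e; apply: eq_bigr => v _; rewrite e. Qed.

Lemma ES_eq_in S f g w : (forall v, agree S v w -> f v = g v) -> ES S f w = ES S g w.
Proof. by move=> e; apply: eq_bigr => v /e ->. Qed.

Lemma ES_ge0 S f w : (forall v, 0 <= f v) -> 0 <= ES S f w.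
Proof.
move=> h; apply: sumr_ge0 => v _; apply: mulr_ge0 => //.
by apply: prodr_ge0 => z _; apply: pw_ge0.
Qed.

Lemma ES_N S f w : ES S (fun v => - f v) w = - ES S f w.
Proof. by rewrite /ES -sumrN; apply: eq_bigr => v _; rewrite mulrN. Qed.

Lemma ES_B S f g w : ES S (fun v => f v - g v) w = ES S f w - ES S g w.
Proof. by rewrite /ES -sumrB; apply: eq_bigr => v _; rewrite mulrBr. Qed.

Lemma ES1 S w : ES S (fun=> 1) w = 1.
Proof.
elim/set_ind': S w => [|x S xS IH] w; first by rewrite ES0.
by rewrite ESU // !IH !mulr1 addrC subrK.
Qed.

Lemma ES_1B S f w : ES S (fun v => 1 - f v) w = 1 - ES S f w.
Proof. by rewrite ES_B ES1. Qed.

Lemma ES_coord x w : ES setT (fun v => (~~ v x)%:R) w = 1 - p x.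
Proof.
have xS : x \notin setT :\ x by rewrite !inE eqxx.
rewrite -(setD1K (in_setT x)) ESU //.
rewrite (@ES_eq_in _ _ (fun=> 0)); last by move=> v /agree_at ->.
rewrite (@ES_eq_in _ _ (fun=> 1) (upd w x false)); last by move=> v /agree_at ->.
by rewrite ES1 /ES big1 ?mulr0 ?add0r ?mulr1 // => v _; rewrite mulr0.
Qed.

Lemma ES_Prob (A : pred {ffun I -> bool}) w :
  \sum_(v | A v) \prod_(z : I) (if v z then p z else 1 - p z) = ES setT (fun v => (A v)%:R) w.
Proof.
rewrite /ES big_mkcond; apply: eq_big => v.
  by symmetry; apply/forallP => z; rewrite in_setT.
move=> _; rewrite [X in _ = X * _](eq_bigl xpredT); last by move=> z; rewrite in_setT.
by case: (A v); rewrite ?mulr1 ?mulr0.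
Qed.

Variable sigma : I -> bool.
Definition leo (v w : {ffun I -> bool}) :=
  forall z, if sigma z then v z ==> w z else w z ==> v z.
Definition decr (f : {ffun I -> bool} -> F) := forall v w, leo v w -> f w <= f v.
Definition incr (f : {ffun I -> bool} -> F) := forall v w, leo v w -> f v <= f w.

Lemma leo_upd v w x b : leo v w -> leo (upd v x b) (upd w x b).
Proof.
move=> h z; rewrite /upd !ffunE; case: (z == x); last exact: h.
by case: (sigma z); rewrite implybb.
Qed.

Lemma leo_x w x : if sigma x then leo (upd w x false) (upd w x true)
                  else leo (upd w x true) (upd w x false).
Proof.
case sx: (sigma x) => z; rewrite /upd !ffunE; case: eqP => [->|_];
  rewrite ?sx //; by case: (sigma z); rewrite implybb.
Qed.

Lemma ES_decr S f : decr f -> decr (ES S f).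
Proof.
move=> hf; elim/set_ind': S => [|x S xS IH] v w hvw; first by rewrite !ES0; apply: hf.
have [p0 p1] := andP (hp x).
rewrite !ESU //; apply: lerD; apply: ler_wpM2l; rewrite ?subr_ge0 //;
  by apply: IH; apply: leo_upd.
Qed.

Lemma harris S f g : decr f -> decr g ->
  forall w, ES S f w * ES S g w <= ES S (fun v => f v * g v) w.
Proof.
move=> hf hg; elim/set_ind': S => [|x S xS IH] w; first by rewrite !ES0.
rewrite !ESU //.
have hf' := ES_decr S hf; have hg' := ES_decr S hg.
set f1 := ES S f (upd w x true); set f0 := ES S f (upd w x false).
set g1 := ES S g (upd w x true); set g0 := ES S g (upd w x false).
have D : 0 <= (f0 - f1) * (g0 - g1).
  have := leo_x w x; case: (sigma x) => h.
    by apply: mulr_ge0; rewrite subr_ge0; [apply: hf'|apply: hg'].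
  by apply: mulr_le0; rewrite subr_le0; [apply: hf'|apply: hg'].
have H1 := IH (upd w x true); have H0 := IH (upd w x false).
have [p0 p1] := andP (hp x).
have pp : 0 <= p x * (1 - p x) by apply: mulr_ge0; rewrite ?subr_ge0.
have E1 : 0 <= p x * (ES S (fun v => f v * g v) (upd w x true) - f1 * g1)
  by apply: mulr_ge0; rewrite ?subr_ge0.
have E0 : 0 <= (1 - p x) * (ES S (fun v => f v * g v) (upd w x false) - f0 * g0)
  by apply: mulr_ge0; rewrite ?subr_ge0.
have E2 : 0 <= p x * (1 - p x) * ((f0 - f1) * (g0 - g1)) by apply: mulr_ge0.
nra.
Qed.

Lemma rharris S f g : decr f -> incr g ->
  forall w, ES S (fun v => f v * g v) w <= ES S f w * ES S g w.
Proof.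
move=> hf hg w.
have hg' : decr (fun v => - g v) by move=> v u h; rewrite lerN2; apply: hg.
have := harris S hf hg' w.
rewrite (@ES_ext S (fun v => f v * - g v) (fun v => - (f v * g v))); last by move=> v; rewrite mulrN.
by rewrite !ES_N mulrN lerN2.
Qed.

Lemma decr_mul f g : decr f -> decr g -> (forall v, 0 <= f v) -> (forall v, 0 <= g v) ->
  decr (fun v => f v * g v).
Proof. by move=> hf hg f0 g0 v w h; apply: ler_pM; auto. Qed.

Lemma incr_mul f g : incr f -> incr g -> (forall v, 0 <= f v) -> (forall v, 0 <= g v) ->
  incr (fun v => f v * g v).
Proof. by move=> hf hg f0 g0 v w h; apply: ler_pM; auto. Qed.


Lemma decr_prod (J : eqType) (s : seq J) fs :
  (forall j, j \in s -> decr (fs j)) -> (forall j v, 0 <= fs j v) ->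
  decr (fun v => \prod_(j <- s) fs j v).
Proof.
elim: s => [|a s IH] hd h0; first by move=> v w _; rewrite !big_nil.
move=> v w hvw; rewrite !big_cons; apply: ler_pM.
- exact: h0.
- by apply: prodr_ge0.
- by apply: (hd a) => //; rewrite mem_head.
- by apply: IH => // j js; apply: hd; rewrite inE js orbT.
Qed.

Lemma incr_prod (J : eqType) (s : seq J) fs :
  (forall j, j \in s -> incr (fs j)) -> (forall j v, 0 <= fs j v) ->
  incr (fun v => \prod_(j <- s) fs j v).
Proof.
elim: s => [|a s IH] hd h0; first by move=> v w _; rewrite !big_nil.
move=> v w hvw; rewrite !big_cons; apply: ler_pM.
- exact: h0.
- by apply: prodr_ge0.
- by apply: (hd a) => //; rewrite mem_head.
- by apply: IH => // j js; apply: hd; rewrite inE js orbT.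
Qed.

Lemma harris_prod (J : eqType) (s : seq J) fs S w :
  (forall j, decr (fs j)) -> (forall j v, 0 <= fs j v) ->
  \prod_(j <- s) ES S (fs j) w <= ES S (fun v => \prod_(j <- s) fs j v) w.
Proof.
move=> hd h0; elim: s => [|a s IH].
  by rewrite big_nil (@ES_ext S _ (fun=> 1)) ?ES1 // => v; rewrite big_nil.
rewrite big_cons (@ES_ext S (fun v => \prod_(j <- a :: s) fs j v) (fun v => fs a v * \prod_(j <- s) fs j v)); last first.
  by move=> v; rewrite big_cons.
apply: le_trans (harris S (hd a) _ w); last by apply: decr_prod.
by apply: ler_wpM2l => //; apply: ES_ge0.
Qed.
End Harris.

Lemma rharris_prod (F : realFieldType) (I : finType) (p : I -> F) (hp : forall x, 0 <= p x <= 1)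
  (J : eqType) (s : seq J) (sig : J -> I -> bool) gs S w :
  uniq s -> (forall j v, 0 <= gs j v) -> (forall j, decr (sig j) (gs j)) ->
  (forall j k, j != k -> incr (sig j) (gs k)) ->
  ES p S (fun v => \prod_(k <- s) gs k v) w <= \prod_(k <- s) ES p S (gs k) w.
Proof.
move=> + h0 hd hi; elim: s => [|a s IH].
  by rewrite big_nil (@ES_ext _ _ p S _ (fun=> 1)) ?ES1 // => v; rewrite big_nil.
rewrite cons_uniq => /andP[nas us].
rewrite big_cons (@ES_ext _ _ p S (fun v => \prod_(j <- a :: s) gs j v) (fun v => gs a v * \prod_(j <- s) gs j v)); last first.
  by move=> v; rewrite big_cons.
apply: le_trans (rharris hp S (hd a) _ w) _.
  apply: incr_prod => // j js; apply: hi; apply/eqP => aj; move: nas; rewrite aj js.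
  done.
by apply: ler_wpM2l; [apply: ES_ge0|apply: IH].
Qed.
Lemma adj_cases (R N : nat) (r : 'I_R) (i j : 'I_N) :
  (exists e : upair N, ((val e = (i, j)) \/ (val e = (j, i))) /\
     forall w : outcome R N, adj w r i j = w (r, e)) \/
  (forall w : outcome R N, adj w r i j = false).
Proof.
rewrite /adj; case: insubP => [e _ He|_]; first by left; exists e; split; [left|].
case: insubP => [e _ He|_]; first by left; exists e; split; [right|].
by right.
Qed.

Lemma adj_mono (R N : nat) (r : 'I_R) (i j : 'I_N) (v w : outcome R N) :
  (forall z : 'I_R * upair N, z.1 = r -> v z ==> w z) -> adj v r i j ==> adj w r i j.
Proof.
move=> h; case: (adj_cases r i j) => [[e [_ E]]|E]; rewrite !E //.
by apply: h.
Qed.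

Definition Aev (R N C : nat) (y : 'I_N -> 'I_C) (i : 'I_N) (r : 'I_R) (w : outcome R N) :=
  [forall j, adj w r i j ==> (y j == y i)].

Lemma A_mono (R N C : nat) (y : 'I_N -> 'I_C) i (r : 'I_R) (v w : outcome R N) :
  (forall z : 'I_R * upair N, z.1 = r -> v z ==> w z) -> Aev y i r w ==> Aev y i r v.
Proof.
move=> h; apply/implyP => /forallP H; apply/forallP => j.
have := H j; have := adj_mono i j h; do 2 case: adj => //.
Qed.

Lemma ind_le (F : numDomainType) (a b : bool) : (a ==> b) -> (a%:R : F) <= b%:R.
Proof. by case: a; case: b. Qed.

Lemma ind_ge0 (F : numDomainType) (a : bool) : 0 <= (a%:R : F).
Proof. by case: a. Qed.

Lemma ind_forall (F : numDomainType) (J : finType) (P : pred J) :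
  ([forall j, P j]%:R : F) = \prod_j (P j)%:R.
Proof.
case: (boolP [forall j, P j]) => [/forallP H|].
  by rewrite big1 // => j _; rewrite H.
rewrite negb_forall => /existsP[j Hj]; rewrite (bigD1 j) //= (negbTE Hj) mul0r.
done.
Qed.

Lemma ind_exists (F : numDomainType) (J : finType) (P : pred J) :
  ([exists j, P j]%:R : F) = 1 - \prod_j (1 - (P j)%:R).
Proof.
have -> : [exists j, P j] = ~~ [forall j, ~~ P j] by rewrite negb_forall; apply: eq_existsb => j; rewrite negbK.
have e : forall b : bool, ((~~ b)%:R : F) = 1 - b%:R by case; rewrite /= ?subrr ?subr0.
rewrite e ind_forall; congr (_ - _).
by apply: eq_bigr => j _; rewrite e.
Qed.

Section Main.
Variables (F : realFieldType) (N C R : nat) (y : 'I_N -> 'I_C).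
Variable (p : 'I_R * upair N -> F).
Hypothesis hp : forall x, 0 <= p x <= 1.
Variable (q : F).
Hypothesis hq01 : 0 <= q <= 1.
Hypothesis hq : forall (r : 'I_R) (e : upair N),
          y (val e).1 != y (val e).2 -> p (r, e) <= q.

Definition ind (b : bool) : F := b%:R.

Lemma LA (i : 'I_N) (r : 'I_R) (w0 : outcome R N) :
  (1 - q) ^+ #|[set j | y j != y i]| <= ES p setT (fun v => ind (Aev y i r v)) w0.
Proof.
have [q0 q1] := andP hq01.
rewrite (@ES_ext _ _ p setT _ (fun v => \prod_j ind (adj v r i j ==> (y j == y i)))); last first.
  by move=> v; rewrite /ind /Aev ind_forall.
apply: le_trans (harris_prod hp (sigma := fun _ => true) _ _ _ _ _); last first.
- by move=> j v; apply: ind_ge0.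
- move=> j v w hvw; apply: ind_le.
  have := adj_mono (r := r) i j (v := v) (w := w) (fun z _ => hvw z).
  by case: (adj v r i j); case: (adj w r i j); case: (y j == y i).
rewrite -prodr_const big_mkcond /=; apply: ler_prod => j _.
case: ifP => hj; rewrite ?inE in hj; apply/andP; split; rewrite ?subr_ge0 ?ler01 //.
- case: (adj_cases r i j) => [[e [He E]]|E].
    rewrite (@ES_ext _ _ p setT _ (fun v => ((~~ v (r, e))%:R))); last first.
      by move=> v; rewrite E /ind (negbTE hj) implybF.
    rewrite ES_coord lerD2l lerN2; apply: hq.
    by case: He => ->; rewrite //= eq_sym.
  rewrite (@ES_ext _ _ p setT _ (fun v => 1)); last by move=> v; rewrite E.
  by rewrite ES1 lerBlDr lerDl.
- rewrite (@ES_ext _ _ p setT _ (fun v => 1)); last by move=> v; rewrite (negbFE hj) implybT.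
  by rewrite ES1.
Qed.

Definition Bev (i : 'I_N) (w : outcome R N) := [exists r, Aev y i r w].

Lemma LB (i : 'I_N) (w0 : outcome R N) :
  1 - (1 - (1 - q) ^+ #|[set j | y j != y i]|) ^+ R <= ES p setT (fun v => ind (Bev i v)) w0.
Proof.
have [q0 q1] := andP hq01.
rewrite (@ES_ext _ _ p setT _ (fun v => 1 - \prod_r (1 - ind (Aev y i r v)))); last first.
  by move=> v; rewrite /ind /Bev ind_exists.
rewrite ES_1B lerD2l lerN2.
have g0 : forall (r : 'I_R) (v : outcome R N), 0 <= 1 - ind (Aev y i r v).
  by move=> r v; rewrite /ind; case: (Aev y i r v); rewrite ?subrr ?subr0.
apply: le_trans (rharris_prod hp (s := index_enum 'I_R)
   (sig := fun r0 (z : 'I_R * upair N) => z.1 != r0) _ _ _ _ _ _) _.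
- exact: index_enum_uniq.
- exact: g0.
- move=> r0 v w hvw; rewrite lerD2l lerN2; apply: ind_le; apply: A_mono => z zr.
  by have := hvw z; rewrite zr eqxx.
- move=> r0 k hk v w hvw; rewrite lerD2l lerN2; apply: ind_le; apply: A_mono => z zr.
  by have := hvw z; rewrite zr eq_sym (negbTE hk).
rewrite -iter_mulr_1 -big_const_ord.
apply: ler_prod => r _; apply/andP; split; first by apply: ES_ge0.
by rewrite ES_1B lerD2l lerN2; apply: LA.
Qed.

End Main.
Lemma count_het (N C K : nat) (y : 'I_N -> 'I_C)
  (hK : forall c : 'I_C, #|[set i | y i == c]| = K) (i : 'I_N) :
  #|[set j | y j != y i]| = ((N * (C - 1)) %/ C)%N.
Proof.
have NCK : N = (C * K)%N.
  rewrite -{1}(card_ord N) -sum1_card (partition_big y xpredT) //=.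
  rewrite (eq_bigr (fun=> K)); last by move=> c _; rewrite sum1dep_card -(hK c).
  by rewrite sum_nat_const card_ord.
have := cardC [set j | y j == y i]; rewrite hK card_ord.
have -> : #|[predC [set j | y j == y i]]| = #|[set j | y j != y i]|.
  by apply: eq_card => j; rewrite !inE.
move=> E.
have -> : #|[set j | y j != y i]| = (N - K)%N by lia.
case: C NCK {y hK i E} => [|C] ->; first by rewrite mul0n div0n.
rewrite -mulnA mulKn //; lia.
Qed.

Unset Implicit Arguments.

Theorem proposition2 (F : realFieldType) (N C K R : nat) (y : 'I_N -> 'I_C)
  (hK : forall c : 'I_C, #|[set i | y i == c]| = K)
  (p : 'I_R * upair N -> F)
  (hp : forall x, 0 <= p x <= 1)
  (q : F) (hq01 : 0 <= q <= 1)
  (hq : forall (r : 'I_R) (e : upair N),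
          y (val e).1 != y (val e).2 -> p (r, e) <= q) :
  Prob p (@homophilous_event R N C y) >=
  (1 - (1 - (1 - q) ^+ ((N * (C - 1)) %/ C)%N) ^+ R) ^+ N.
Proof.
have [q0 q1] := andP hq01.
set w0 : outcome R N := [ffun => false].
rewrite /Prob /weight (ES_Prob p _ w0).
rewrite (@ES_ext _ _ p setT _ (fun v => \prod_i ind F (Bev y i v))); last first.
  by move=> v; rewrite /ind ind_forall.
apply: le_trans (harris_prod hp (sigma := fun _ => true) _ _ _ _ _); last first.
- by move=> j v; apply: ind_ge0.
- move=> j v w hvw; apply: ind_le; apply/implyP => /existsP[r Hr]; apply/existsP; exists r.
  by apply: (implyP (A_mono (v := v) (w := w) _ _ _)) => // z _; apply: hvw.
rewrite -iter_mulr_1 -big_const_ord; apply: ler_prod => i _; apply/andP; split.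
  have h1 : 0 <= (1 - q) ^+ ((N * (C - 1)) %/ C)%N by apply: exprn_ge0; rewrite subr_ge0.
  have h2 : (1 - q) ^+ ((N * (C - 1)) %/ C)%N <= 1 by apply: exprn_ile1; rewrite ?subr_ge0 ?lerBlDr ?lerDl.
  rewrite subr_ge0; apply: exprn_ile1; rewrite ?subr_ge0 //; rewrite lerBlDr lerDl //.
by rewrite -(count_het hK i); apply: LB.
Qed.
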